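(* Let $\Gamma$ be a countable group acting on a countably infinite set $X$ preserving a mean $\mu$, and suppose that for every $\gamma\neq1$ the fixed point set of $\gamma$ in $X$ has $\mu$-measure less than $1$. Then $\Gamma$ admits an action on a countably infinite set $K$ preserving a mean $\nu$ on $K$ such that for every $\gamma\ne1$ the fixed point set of $\gamma$ in $K$ has $\nu$-measure $0$.
   Context: A mean on a set $X$ is a finitely additive $\mu:2^X\to[0,1]$ with $\mu(X)=1$; an action preserves $\mu$ if $\mu(\gamma A)=\mu(A)$ for all $\gamma$ and $A$. *)

(* Defs.v *)
From Stdlib Require Export Reals.
Open Scope R_scope.

Definition is_group (G : Type) (mul : G -> G -> G) (one : G) (inv : G -> G) : Prop :=
  (forall a b c, mul a (mul b c) = mul (mul a b) c) /\
  (forall a, mul one a = a) /\ (forall a, mul a one = a) /\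
  (forall a, mul (inv a) a = one) /\ (forall a, mul a (inv a) = one).

Definition countable (T : Type) : Prop :=
  exists f : T -> nat, forall x y, f x = f y -> x = y.

Definition countably_infinite (T : Type) : Prop :=
  exists f : nat -> T, (forall m n, f m = f n -> m = n) /\ (forall x, exists n, f n = x).

Definition is_action (G X : Type) (mul : G -> G -> G) (one : G)
  (act : G -> X -> X) : Prop :=
  (forall x, act one x = x) /\
  (forall g h x, act (mul g h) x = act g (act h x)).

Definition full_set (X : Type) : X -> Prop := fun _ => True.
Definition set_union {X : Type} (A B : X -> Prop) : X -> Prop := fun x => A x \/ B x.
Definition disjoint {X : Type} (A B : X -> Prop) : Prop := forall x, ~ (A x /\ B x).

Definition is_mean (X : Type) (mu : (X -> Prop) -> R) : Prop :=
  (forall A, 0 <= mu A <= 1) /\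
  mu (full_set X) = 1 /\
  (forall A B, disjoint A B -> mu (set_union A B) = mu A + mu B).

Definition image_set {G X : Type} (act : G -> X -> X) (g : G) (A : X -> Prop) : X -> Prop :=
  fun y => exists a, A a /\ y = act g a.

Definition preserves_mean {G X : Type} (act : G -> X -> X) (mu : (X -> Prop) -> R) : Prop :=
  forall g A, mu (image_set act g A) = mu A.

Definition fix_set {G X : Type} (act : G -> X -> X) (g : G) : X -> Prop :=
  fun x => act g x = x.

(* Main.v *)
Require Import Defs.
From Stdlib Require Import Reals Lra Lia ZArith List Classical ClassicalEpsilon FunctionalExtensionality PropExtensionality.
From Stdlib Require Cantor.
Open Scope R_scope.


Lemma pred_ext {T : Type} (A B : T -> Prop) : (forall x, A x <-> B x) -> A = B.
Proof. intros H; apply functional_extensionality; intros x; apply propositional_extensionality; auto. Qed.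

Section Mean.
Variable T : Type.
Variable m : (T -> Prop) -> R.
Hypothesis Hm : is_mean T m.

Lemma m_ext A B : (forall x, A x <-> B x) -> m A = m B.
Proof. intros H; rewrite (pred_ext A B H); auto. Qed.

Lemma m_bnd A : 0 <= m A <= 1.
Proof. destruct Hm as [H _]; apply H. Qed.

Lemma m_full : m (fun _ => True) = 1.
Proof. destruct Hm as [_ [H _]]; exact H. Qed.

Lemma m_add A B : (forall x, ~ (A x /\ B x)) -> m (fun x => A x \/ B x) = m A + m B.
Proof. destruct Hm as [_ [_ H]]; apply H. Qed.

Lemma m_empty : m (fun _ => False) = 0.
Proof.
  assert (H := m_add (fun _ => False) (fun _ => False) ltac:(firstorder)).
  cbv beta in H. rewrite (m_ext (fun x => False \/ False) (fun _ => False)) in H by tauto. lra.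
Qed.

Lemma m_mono A B : (forall x, A x -> B x) -> m A <= m B.
Proof.
  intros H.
  assert (E := m_add A (fun x => B x /\ ~ A x) ltac:(firstorder)).
  rewrite (m_ext _ B) in E. 2:{ intros x; split; [firstorder|]. intros Hb; destruct (classic (A x)); tauto. }
  pose proof (m_bnd (fun x => B x /\ ~ A x)). lra.
Qed.

Lemma m_union_le A B : m (fun x => A x \/ B x) <= m A + m B.
Proof.
  rewrite (m_ext _ (fun x => A x \/ (B x /\ ~ A x))).
  2:{ intros x; destruct (classic (A x)); tauto. }
  rewrite m_add by firstorder. pose proof (m_mono (fun x => B x /\ ~ A x) B ltac:(firstorder)). lra.
Qed.


Definition indn (B : T -> Prop) (x : T) : nat :=
  if excluded_middle_informative (B x) then 1%nat else 0%nat.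

Fixpoint Ssum (h : T -> nat) (M : nat) : R :=
  match M with O => 0 | S M' => Ssum h M' + m (fun x => (S M' <= h x)%nat) end.

Lemma Ssum_fext h h' M : (forall x, h x = h' x) -> Ssum h M = Ssum h' M.
Proof. intros H. rewrite (functional_extensionality h h' H). auto. Qed.

Lemma Ssum_mono h h' : (forall x, (h x <= h' x)%nat) -> forall M, Ssum h M <= Ssum h' M.
Proof.
  intros H M; induction M; simpl; [lra|].
  pose proof (m_mono (fun x => (S M <= h x)%nat) (fun x => (S M <= h' x)%nat)).
  assert (forall x, (S M <= h x)%nat -> (S M <= h' x)%nat) by (intros x; specialize (H x); lia).
  specialize (H0 H1). lra.
Qed.

Lemma Ssum_bnd h M : 0 <= Ssum h M <= INR M.
Proof.
  induction M; cbn [Ssum]; [simpl; lra|]. rewrite S_INR.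
  pose proof (m_bnd (fun x => (S M <= h x)%nat)). lra.
Qed.

Lemma Ssum_ext h M : (forall x, (h x <= M)%nat) -> forall k, Ssum h (M + k) = Ssum h M.
Proof.
  intros H k; induction k.
  - rewrite Nat.add_0_r; auto.
  - rewrite Nat.add_succ_r; simpl. rewrite IHk.
    rewrite (m_ext _ (fun _ => False)). rewrite m_empty; lra.
    intros x; specialize (H x); split; [lia|tauto].
Qed.

Lemma Ssum_add_ind h B M :
  Ssum (fun x => (h x + indn B x)%nat) M = Ssum h M + m (fun x => (h x < M)%nat /\ B x).
Proof.
  induction M; simpl.
  - rewrite (m_ext _ (fun _ => False)). rewrite m_empty; lra. intros; split; [lia|tauto].
  - rewrite IHM.
    rewrite (m_ext (fun x => (S M <= h x + indn B x)%nat) (fun x => (S M <= h x)%nat \/ (h x = M /\ B x))).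
    2:{ intros x; unfold indn; destruct (excluded_middle_informative (B x)) as [b|b]; split.
        - intros Hx. destruct (Nat.eq_dec (h x) M); [right; split; auto|left; lia].
        - intros [Hx|[Hx _]]; lia.
        - intros Hx; left; lia.
        - intros [Hx|[_ Hx]]; [lia|tauto]. }
    rewrite m_add by (intros x; lia).
    rewrite (m_ext (fun x => (h x < S M)%nat /\ B x) (fun x => ((h x < M)%nat /\ B x) \/ (h x = M /\ B x))).
    2:{ intros x; split; [intros [H1 H2]; destruct (Nat.eq_dec (h x) M); [right|left]; split; auto; lia|].
        intros [[]|[]]; split; auto; lia. }
    rewrite m_add by (intros x; lia). lra.
Qed.

Lemma Ssum_add M2 : forall h1 h2 M1, (forall x, (h1 x <= M1)%nat) -> (forall x, (h2 x <= M2)%nat) ->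
  Ssum (fun x => (h1 x + h2 x)%nat) (M1 + M2) = Ssum h1 M1 + Ssum h2 M2.
Proof.
  induction M2; intros h1 h2 M1 H1 H2.
  - rewrite Nat.add_0_r. simpl. rewrite (Ssum_fext _ h1). lra. intros x; specialize (H2 x); lia.
  - set (h2' := fun x => Nat.min (h2 x) M2).
    set (B := fun x => h2 x = S M2).
    assert (E : forall x, h2 x = (h2' x + indn B x)%nat).
    { intros x; unfold h2', B, indn; specialize (H2 x).
      destruct (excluded_middle_informative (h2 x = S M2)); lia. }
    rewrite (Ssum_fext (fun x => (h1 x + h2 x)%nat) (fun x => ((h1 x + h2' x) + indn B x)%nat)).
    2:{ intros x; rewrite E; lia. }
    rewrite (Ssum_fext h2 (fun x => (h2' x + indn B x)%nat)) by auto.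
    rewrite Nat.add_succ_r. rewrite !Ssum_add_ind.
    assert (Hb' : forall x, (h2' x <= M2)%nat) by (intros x; unfold h2'; lia).
    rewrite (m_ext (fun x => (h1 x + h2' x < S (M1 + M2))%nat /\ B x) B).
    2:{ intros x; specialize (H1 x); specialize (Hb' x); split; [tauto|]. intros; split; auto; lia. }
    rewrite (m_ext (fun x => (h2' x < S M2)%nat /\ B x) B).
    2:{ intros x; specialize (Hb' x); split; [tauto|]. intros; split; auto; lia. }
    replace (S (M1 + M2)) with (M1 + M2 + 1)%nat by lia.
    rewrite Ssum_ext by (intros x; specialize (H1 x); specialize (Hb' x); lia).
    replace (S M2) with (M2 + 1)%nat by lia.
    rewrite (Ssum_ext h2') by auto.
    rewrite IHM2 by auto. lra.
Qed.

Lemma Ssum_scale h M : (forall x, (h x <= M)%nat) -> forall k,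
  Ssum (fun x => (k * h x)%nat) (k * M) = INR k * Ssum h M.
Proof.
  intros H k; induction k.
  - simpl. lra.
  - rewrite (Ssum_fext _ (fun x => (h x + k * h x)%nat)) by (intros; simpl; lia).
    replace (S k * M)%nat with (M + k * M)%nat by (simpl; lia).
    rewrite Ssum_add; auto. rewrite IHk, S_INR; lra.
    intros x; specialize (H x); nia.
Qed.

Lemma Ssum_const c M : (M <= c)%nat -> Ssum (fun _ => c) M = INR M.
Proof.
  induction M; intros H; simpl; [lra|].
  rewrite IHM by lia. rewrite (m_ext _ (fun _ => True)) by (intros; split; auto; lia).
  rewrite m_full. destruct M; simpl; lra.
Qed.

Lemma Ssum_ind k B : Ssum (fun x => (k * indn B x)%nat) k = INR k * m B.
Proof.
  pose proof (Ssum_scale (indn B) 1 ltac:(intros x; unfold indn; destruct excluded_middle_informative; lia) k) as E.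
  rewrite Nat.mul_1_r in E. rewrite E.
  simpl. rewrite (m_ext _ B). lra.
  intros x; unfold indn; destruct excluded_middle_informative; split; intros; try lia; tauto.
Qed.

End Mean.


Lemma arch_le x y c : 0 <= c -> (forall n, x <= y + c / INR (S n)) -> x <= y.
Proof.
  intros Hc H. destruct (Rle_dec x y) as [|Hn]; auto. exfalso.
  assert (Hd : 0 < x - y) by lra.
  destruct (INR_unbounded (c / (x - y))) as [n Hn'].
  specialize (H n). assert (Hs : INR n < INR (S n)) by (apply lt_INR; lia).
  assert (HS : 0 < INR (S n)) by (apply lt_0_INR; lia).
  assert (c / INR (S n) < x - y).
  { apply (Rmult_lt_reg_r (INR (S n))); auto. unfold Rdiv. rewrite Rmult_assoc, Rinv_l by lra.
    assert (c / (x - y) * (x - y) = c) by (field; lra).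
    assert (c / (x-y) * (x - y) < INR (S n) * (x - y)) by (apply Rmult_lt_compat_r; lra). lra. }
  lra.
Qed.

Definition phi (N : nat) (r : R) : nat := Z.to_nat (Int_part (INR N * r)).

Lemma phi_spec N r : 0 <= r -> INR (phi N r) <= INR N * r < INR (phi N r) + 1.
Proof.
  intros Hr. unfold phi. destruct (base_Int_part (INR N * r)) as [H1 H2].
  assert (0 <= INR N * r) by (apply Rmult_le_pos; auto; apply pos_INR).
  assert (Hz : (0 <= Int_part (INR N * r))%Z).
  { assert (-1 < IZR (Int_part (INR N * r))) by lra. apply lt_IZR in H0. lia. }
  rewrite INR_IZR_INZ, Z2Nat.id by auto. lra.
Qed.

Lemma phi_le N r : 0 <= r <= 1 -> (phi N r <= N)%nat.
Proof.
  intros Hr. destruct (phi_spec N r) as [H1 _]; try lra.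
  assert (INR N * r <= INR N) by (pose proof (pos_INR N); nra).
  apply INR_le; lra.
Qed.

Lemma phi_mono N r s : 0 <= r -> r <= s -> (phi N r <= phi N s)%nat.
Proof.
  intros Hr Hrs. destruct (phi_spec N r); auto. destruct (phi_spec N s); try lra.
  assert (INR N * r <= INR N * s) by (apply Rmult_le_compat_l; auto; apply pos_INR).
  assert (INR (phi N r) < INR (phi N s + 1)) by (rewrite plus_INR; simpl; lra).
  apply INR_lt in H4; lia.
Qed.

Lemma phi_1 N : phi N 1 = N.
Proof. unfold phi. rewrite Rmult_1_r, Int_part_INR. apply Nat2Z.id. Qed.

Lemma phi_0 N : phi N 0 = 0%nat.
Proof. unfold phi. rewrite Rmult_0_r. change 0 with (INR 0). rewrite Int_part_INR. reflexivity. Qed.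

Definition rind {T} (B : T -> Prop) (x : T) : R :=
  if excluded_middle_informative (B x) then 1 else 0.

Section Integral.
Variable T : Type.
Variable m : (T -> Prop) -> R.
Hypothesis Hm : is_mean T m.

Definition unitf (f : T -> R) := forall x, 0 <= f x <= 1.

Definition In (n : nat) (f : T -> R) : R :=
  Ssum T m (fun x => phi (S n) (f x)) (S n) / INR (S n).

Lemma INRS_pos n : 0 < INR (S n).
Proof. apply lt_0_INR; lia. Qed.

Lemma In_bnd n f : 0 <= In n f <= 1.
Proof.
  unfold In. pose proof (Ssum_bnd T m Hm (fun x => phi (S n) (f x)) (S n)).
  pose proof (INRS_pos n). split.
  - apply Rmult_le_pos; [lra|]. left; apply Rinv_0_lt_compat; lra.
  - unfold Rdiv. apply (Rmult_le_reg_r (INR (S n))); auto. rewrite Rmult_assoc, Rinv_l; lra.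
Qed.

Lemma In_cmp a b f : unitf f -> In a f <= In b f + 1 / INR (S b).
Proof.
  intros Hf. unfold In. set (A := S a). set (B := S b).
  set (ha := fun x => phi A (f x)). set (hb := fun x => phi B (f x)).
  assert (Hpt : forall x, (B * ha x <= A * hb x + A)%nat).
  { intros x. unfold ha, hb. destruct (Hf x).
    destruct (phi_spec A (f x)); auto. destruct (phi_spec B (f x)); auto.
    assert (INR B * INR (phi A (f x)) <= INR B * (INR A * f x)) by (apply Rmult_le_compat_l; auto; apply pos_INR).
    assert (INR A * (INR B * f x) < INR A * (INR (phi B (f x)) + 1)) by (apply Rmult_lt_compat_l; auto; apply lt_0_INR; unfold A; lia).
    assert (Hq : INR (B * phi A (f x)) < INR (A * phi B (f x) + A + 1)).
    { rewrite !plus_INR, !mult_INR. change (INR 1) with 1. lra. }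
    apply INR_lt in Hq. lia. }
  assert (Hba : forall x, (ha x <= A)%nat) by (intros; apply phi_le; auto).
  assert (Hbb : forall x, (hb x <= B)%nat) by (intros; apply phi_le; auto).
  pose proof (Ssum_scale T m Hm ha A Hba B) as E1.
  assert (E2 : Ssum T m (fun x => (A * hb x + A)%nat) (A * B + A) = INR A * Ssum T m hb B + INR A).
  { rewrite Ssum_add; auto.
    - rewrite Ssum_scale, Ssum_const; auto.
    - intros x; specialize (Hbb x); nia. }
  assert (E3 : Ssum T m (fun x => (B * ha x)%nat) (B * A) <= Ssum T m (fun x => (A * hb x + A)%nat) (A * B + A)).
  { replace (A * B + A)%nat with (B * A + A)%nat by lia.
    rewrite <- (Ssum_ext T m Hm (fun x => (B * ha x)%nat) (B * A) ltac:(intros x; apply Nat.mul_le_mono_l; apply Hba) A).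
    apply (Ssum_mono T m Hm); auto. }
  rewrite E1, E2 in E3.
  pose proof (INRS_pos a); pose proof (INRS_pos b). fold A B in H, H0.
  unfold Rdiv. apply (Rmult_le_reg_r (INR A * INR B)). nra.
  replace (Ssum T m ha A * / INR A * (INR A * INR B)) with (INR B * Ssum T m ha A) by (field; lra).
  replace ((Ssum T m hb B * / INR B + 1 * / INR B) * (INR A * INR B)) with (INR A * Ssum T m hb B + INR A) by (field; lra).
  exact E3.
Qed.

Lemma In_add n f g : unitf f -> unitf g -> unitf (fun x => f x + g x) ->
  In n f + In n g <= In n (fun x => f x + g x) <= In n f + In n g + 1 / INR (S n).
Proof.
  intros Hf Hg Hfg. unfold In. set (N := S n).
  set (hf := fun x => phi N (f x)). set (hg := fun x => phi N (g x)).
  set (hs := fun x => phi N (f x + g x)).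
  assert (Hpt : forall x, (hf x + hg x <= hs x <= hf x + hg x + 1)%nat).
  { intros x. unfold hf, hg, hs. destruct (Hf x), (Hg x).
    destruct (phi_spec N (f x)); auto. destruct (phi_spec N (g x)); auto.
    destruct (phi_spec N (f x + g x)); [lra|].
    assert (Ha : INR (phi N (f x) + phi N (g x)) < INR (phi N (f x + g x) + 1)) by (rewrite !plus_INR; simpl; lra).
    assert (Hb : INR (phi N (f x + g x)) < INR (phi N (f x) + phi N (g x) + 1 + 1)) by (rewrite !plus_INR; simpl; lra).
    apply INR_lt in Ha, Hb. lia. }
  assert (Bf : forall x, (hf x <= N)%nat) by (intros; apply phi_le; auto).
  assert (Bg : forall x, (hg x <= N)%nat) by (intros; apply phi_le; auto).
  assert (Bs : forall x, (hs x <= N)%nat) by (intros; apply phi_le; auto).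
  pose proof (Ssum_add T m Hm N hf hg N Bf Bg) as E1.
  pose proof (Ssum_add T m Hm 1 (fun x => (hf x + hg x)%nat) (fun _ => 1%nat) (N + N) ltac:(intros x; apply Nat.add_le_mono; [apply Bf|apply Bg]) ltac:(intros; cbv beta; lia)) as E2.
  rewrite Ssum_const in E2; [|exact Hm|lia].
  assert (L : Ssum T m (fun x => (hf x + hg x)%nat) (N + N) <= Ssum T m hs (N + N)) by (apply (Ssum_mono T m Hm); intros x; apply Hpt).
  assert (U : Ssum T m hs (N + N + 1) <= Ssum T m (fun x => (hf x + hg x + 1)%nat) (N + N + 1)) by (apply (Ssum_mono T m Hm); intros x; apply Hpt).
  rewrite (Ssum_ext T m Hm hs N Bs) in L.
  rewrite <- Nat.add_assoc, (Ssum_ext T m Hm hs N Bs) in U.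
  rewrite Nat.add_assoc in U. rewrite E2, E1 in U. rewrite E1 in L. change (INR 1) with 1 in U.
  pose proof (INRS_pos n). fold N in H. unfold Rdiv. split.
  - rewrite <- Rmult_plus_distr_r. apply Rmult_le_compat_r; [left; apply Rinv_0_lt_compat; lra| lra].
  - apply (Rmult_le_reg_r (INR N)); auto.
    replace ((Ssum T m hf N * / INR N + Ssum T m hg N * / INR N + 1 * / INR N) * INR N) with (Ssum T m hf N + Ssum T m hg N + 1) by (field; lra).
    replace (Ssum T m hs N * / INR N * INR N) with (Ssum T m hs N) by (field; lra). lra.
Qed.


Lemma Ssum_comp (a : T -> T) (Ha : forall P : T -> Prop, m (fun x => P (a x)) = m P) h M :
  Ssum T m (fun x => h (a x)) M = Ssum T m h M.
Proof.
  induction M; simpl; auto. rewrite IHM. f_equal.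
  exact (Ha (fun y => (S M <= h y)%nat)).
Qed.

Lemma In_inv (a : T -> T) (Ha : forall P : T -> Prop, m (fun x => P (a x)) = m P) n f :
  In n (fun x => f (a x)) = In n f.
Proof. unfold In. rewrite (Ssum_comp a Ha (fun x => phi (S n) (f x))). reflexivity. Qed.

Lemma In_ind n B : In n (rind B) = m B.
Proof.
  unfold In. rewrite (Ssum_fext T m (fun x => phi (S n) (rind B x)) (fun x => (S n * indn T B x)%nat)).
  2:{ intros x; unfold rind, indn; destruct excluded_middle_informative.
      - rewrite phi_1; lia.
      - rewrite phi_0; lia. }
  rewrite Ssum_ind by exact Hm. pose proof (INRS_pos n). field. lra.
Qed.

Lemma In_scale_le n t B : 0 <= t <= 1 -> In n (fun x => t * rind B x) <= t * m B.
Proof.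
  intros Ht. unfold In. set (N := S n). set (k := phi N t).
  rewrite (Ssum_fext T m (fun x => phi N (t * rind B x)) (fun x => (k * indn T B x)%nat)).
  2:{ intros x; unfold rind, indn, k; destruct excluded_middle_informative.
      - rewrite Rmult_1_r; lia.
      - rewrite Rmult_0_r, phi_0; lia. }
  assert (Hk : (k <= N)%nat) by (apply phi_le; auto).
  assert (E : Ssum T m (fun x => (k * indn T B x)%nat) N = Ssum T m (fun x => (k * indn T B x)%nat) k).
  { replace N with (k + (N - k))%nat by lia.
    rewrite Ssum_ext; [reflexivity| exact Hm| intros x; unfold indn; destruct excluded_middle_informative; nia]. }
  rewrite E.
  rewrite Ssum_ind by exact Hm.
  destruct (phi_spec N t) as [H1 _]; [lra|]. fold k in H1.
  pose proof (INRS_pos n). fold N in H. pose proof (m_bnd T m Hm B).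
  unfold Rdiv. apply (Rmult_le_reg_r (INR N)); auto.
  replace (INR k * m B * / INR N * INR N) with (INR k * m B) by (field; lra).
  assert (INR k * m B <= INR N * t * m B) by (apply Rmult_le_compat_r; lra). lra.
Qed.

Lemma In_mono n f g : unitf f -> unitf g -> (forall x, f x <= g x) -> In n f <= In n g.
Proof.
  intros Hf Hg H. unfold In. unfold Rdiv. apply Rmult_le_compat_r.
  - left; apply Rinv_0_lt_compat, INRS_pos.
  - apply (Ssum_mono T m Hm). intros x. apply phi_mono; [apply Hf|apply H].
Qed.

Definition I (f : T -> R) : R.
Proof.
  refine (proj1_sig (completeness (fun r => exists n, r = In n f) _ _)).
  - exists 1. intros r [n Hn]; rewrite Hn; apply In_bnd.
  - exists (In 0 f). exists 0%nat. reflexivity.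
Defined.

Lemma I_spec f : is_lub (fun r => exists n, r = In n f) (I f).
Proof. unfold I. apply proj2_sig. Qed.

Lemma I_ge n f : In n f <= I f.
Proof.
  destruct (I_spec f) as [Hl _]. apply Hl. exists n; auto.
Qed.

Lemma I_le n f : unitf f -> I f <= In n f + 1 / INR (S n).
Proof.
  intros Hf. destruct (I_spec f) as [_ Hl]. apply Hl.
  intros r [k Hk]; rewrite Hk; apply In_cmp; auto.
Qed.

Lemma I_bnd f : unitf f -> 0 <= I f <= 1.
Proof.
  intros Hf. split.
  - pose proof (I_ge 0 f); pose proof (In_bnd 0 f); lra.
  - destruct (I_spec f) as [_ Hl]. apply Hl. intros r [k Hk]; rewrite Hk; apply In_bnd.
Qed.

Lemma I_add f g : unitf f -> unitf g -> unitf (fun x => f x + g x) ->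
  I (fun x => f x + g x) = I f + I g.
Proof.
  intros Hf Hg Hfg. apply Rle_antisym.
  - apply (arch_le _ _ 3); [lra|]. intros n.
    pose proof (I_le n _ Hfg). pose proof (In_add n f g Hf Hg Hfg).
    pose proof (I_ge n f). pose proof (I_ge n g).
    assert (3 / INR (S n) = 1 / INR (S n) + 1 / INR (S n) + 1 / INR (S n)) by (field; pose proof (INRS_pos n); lra). lra.
  - apply (arch_le _ _ 3); [lra|]. intros n.
    pose proof (I_le n _ Hf). pose proof (I_le n _ Hg). pose proof (In_add n f g Hf Hg Hfg).
    pose proof (I_ge n (fun x => f x + g x)).
    assert (3 / INR (S n) = 1 / INR (S n) + 1 / INR (S n) + 1 / INR (S n)) by (field; pose proof (INRS_pos n); lra). lra.
Qed.

Lemma unitf_rind B : unitf (rind B).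
Proof. intros x; unfold rind; destruct excluded_middle_informative; lra. Qed.

Lemma I_ind B : I (rind B) = m B.
Proof.
  apply Rle_antisym.
  - apply (arch_le _ _ 1); [lra|]. intros n. rewrite <- (In_ind n B). apply I_le, unitf_rind.
  - rewrite <- (In_ind 0 B). apply I_ge.
Qed.

Lemma I_one : I (fun _ => 1) = 1.
Proof.
  rewrite (functional_extensionality (fun _ : T => 1) (rind (fun _ => True))).
  - rewrite I_ind. apply (m_full T m Hm).
  - intros x; unfold rind; destruct excluded_middle_informative; tauto.
Qed.

Lemma I_inv (a : T -> T) (Ha : forall P : T -> Prop, m (fun x => P (a x)) = m P) f :
  unitf f -> I (fun x => f (a x)) = I f.
Proof.
  intros Hf. assert (Hfa : unitf (fun x => f (a x))) by (intros x; apply Hf).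
  apply Rle_antisym; apply (arch_le _ _ 1); try lra; intros n.
  - pose proof (I_le n _ Hfa) as H1. pose proof (I_ge n f). rewrite (In_inv a Ha n f) in H1. lra.
  - pose proof (I_le n f Hf). pose proof (I_ge n (fun x => f (a x))) as H1.
    rewrite (In_inv a Ha n f) in H1. lra.
Qed.

Lemma I_mono f g : unitf f -> unitf g -> (forall x, f x <= g x) -> I f <= I g.
Proof.
  intros Hf Hg H. apply (arch_le _ _ 1); [lra|]. intros n.
  pose proof (I_le n f Hf). pose proof (In_mono n f g Hf Hg H). pose proof (I_ge n g). lra.
Qed.

Lemma I_scale_le t B : 0 <= t <= 1 -> I (fun x => t * rind B x) <= t * m B.
Proof.
  intros Ht. apply (arch_le _ _ 1); [lra|]. intros n.
  assert (unitf (fun x => t * rind B x)).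
  { intros x; unfold rind; destruct excluded_middle_informative; nra. }
  pose proof (I_le n _ H). pose proof (In_scale_le n t B Ht). lra.
Qed.

End Integral.


Definition Fam := (nat -> Prop) -> Prop.
Definition frechet : Fam := fun A => exists N, forall n, (N <= n)%nat -> A n.
Definition good (F : Fam) : Prop :=
  F (fun _ => True) /\ (forall A B, F A -> (forall n, A n -> B n) -> F B) /\
  (forall A B, F A -> F B -> F (fun n => A n /\ B n)) /\ ~ F (fun _ => False) /\
  (forall A, frechet A -> F A).
Definition sub (F G : Fam) := forall A, F A -> G A.
Definition uC (C : Fam -> Prop) : Fam := fun A => frechet A \/ exists F, C F /\ F A.
Definition chain (C : Fam -> Prop) := forall F G, C F -> C G -> sub F G \/ sub G F.

Lemma fam_ext (F G : Fam) : sub F G -> sub G F -> F = G.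
Proof.
  intros H1 H2. apply functional_extensionality; intros A; apply propositional_extensionality; split; auto.
Qed.

Lemma frechet_good : good frechet.
Proof.
  split; [|split; [|split; [|split]]].
  - exists 0%nat; auto.
  - intros A B [N HN] H. exists N; auto.
  - intros A B [N1 H1] [N2 H2]. exists (N1 + N2)%nat. intros n Hn; split; [apply H1|apply H2]; lia.
  - intros [N HN]. apply (HN N); lia.
  - auto.
Qed.

Lemma good_u C : (forall F, C F -> good F) -> chain C -> good (uC C).
Proof.
  intros HC Hch. destruct frechet_good as [F1 [F2 [F3 [F4 F5]]]].
  split; [|split; [|split; [|split]]].
  - left; apply F1.
  - intros A B [HA|[F [HF HA]]] H.
    + left; eapply F2; eauto.
    + right; exists F; split; auto. destruct (HC F HF) as [_ [K _]]. eapply K; eauto.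
  - intros A B [HA|[F [HF HA]]] [HB|[G [HG HB]]].
    + left; apply F3; auto.
    + right; exists G; split; auto. destruct (HC G HG) as [_ [_ [K [_ K5]]]]. apply K; auto.
    + right; exists F; split; auto. destruct (HC F HF) as [_ [_ [K [_ K5]]]]. apply K; auto.
    + destruct (Hch F G HF HG) as [S|S].
      * right; exists G; split; auto. destruct (HC G HG) as [_ [_ [K _]]]. apply K; auto.
      * right; exists F; split; auto. destruct (HC F HF) as [_ [_ [K _]]]. apply K; auto.
  - intros [H|[F [HF H]]]. apply F4; auto. destruct (HC F HF) as [_ [_ [_ [K _]]]]. auto.
  - intros A HA; left; auto.
Qed.

Definition s (F : Fam) : Fam :=
  match excluded_middle_informative (exists G, good G /\ sub F G /\ ~ sub G F) with
  | left H => proj1_sig (constructive_indefinite_description _ H)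
  | right _ => F
  end.

Lemma s_good F : good F -> good (s F).
Proof.
  intros H; unfold s; destruct excluded_middle_informative as [e|]; auto.
  destruct (constructive_indefinite_description _ e) as [G HG]; simpl; tauto.
Qed.

Lemma s_sub F : sub F (s F).
Proof.
  unfold s; destruct excluded_middle_informative as [e|]; [|intros A; auto].
  destruct (constructive_indefinite_description _ e) as [G HG]; simpl; tauto.
Qed.

Lemma s_strict F : (exists G, good G /\ sub F G /\ ~ sub G F) -> ~ sub (s F) F.
Proof.
  intros E; unfold s; destruct excluded_middle_informative as [e|]; [|tauto].
  destruct (constructive_indefinite_description _ e) as [G HG]; simpl; tauto.
Qed.

Definition tower (X : Fam) : Prop :=
  forall Y : Fam -> Prop, Y frechet -> (forall F, Y F -> Y (s F)) ->
    (forall C, chain C -> (forall F, C F -> Y F) -> Y (uC C)) -> Y X.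

Lemma tower_fr : tower frechet.
Proof. intros Y H1 H2 H3; auto. Qed.
Lemma tower_s F : tower F -> tower (s F).
Proof. intros H Y H1 H2 H3; apply H2, H; auto. Qed.
Lemma tower_u C : chain C -> (forall F, C F -> tower F) -> tower (uC C).
Proof. intros Hc H Y H1 H2 H3; apply H3; auto. intros F HF; apply H; auto. Qed.

Lemma tower_ind (P : Fam -> Prop) : P frechet -> (forall F, tower F -> P F -> P (s F)) ->
  (forall C, chain C -> (forall F, C F -> tower F /\ P F) -> P (uC C)) ->
  forall X, tower X -> P X.
Proof.
  intros H1 H2 H3 X HX.
  assert (tower X /\ P X); [|tauto].
  apply HX.
  - split; auto. apply tower_fr.
  - intros F [HF PF]; split; [apply tower_s|]; auto.
  - intros C Hc HC; split; [apply tower_u; auto; apply HC|]; auto.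
Qed.

Lemma tower_good X : tower X -> good X /\ sub frechet X.
Proof.
  revert X. apply (tower_ind (fun X => good X /\ sub frechet X)).
  - split; [apply frechet_good| intros A; auto].
  - intros F _ [G S]; split; [apply s_good; auto|]. intros A HA; apply s_sub; auto.
  - intros C Hc HC. split; [apply good_u; auto; apply HC|]. intros A HA; left; auto.
Qed.

Definition extreme (c : Fam) := forall x, tower x -> sub x c -> x = c \/ sub (s x) c.

Lemma L1 c : tower c -> extreme c -> forall x, tower x -> sub x c \/ sub (s c) x.
Proof.
  intros Tc Ec. apply (tower_ind (fun x => sub x c \/ sub (s c) x)).
  - left. apply (tower_good c Tc).
  - intros F TF [S|S].
    + destruct (Ec F TF S) as [->|S']; [right; intros A; auto|left; auto].
    + right. intros A HA. apply s_sub; auto.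
  - intros C Hch HC.
    destruct (classic (forall F, C F -> sub F c)) as [Hall|Hn].
    + left. intros A [HA|[F [HF HA]]]. apply (tower_good c Tc); auto. apply (Hall F HF); auto.
    + apply not_all_ex_not in Hn. destruct Hn as [F HF].
      apply imply_to_and in HF. destruct HF as [CF NF].
      destruct (HC F CF) as [_ [S|S]]; [tauto|].
      right. intros A HA. right. exists F; split; auto.
Qed.

Lemma L2 c : tower c -> extreme c.
Proof.
  revert c. apply (tower_ind extreme).
  - intros x Tx S. left. apply fam_ext; auto. apply (tower_good x Tx).
  - intros c' Tc' Ec' x Tx S.
    destruct (L1 c' Tc' Ec' x Tx) as [S'|S'].
    + destruct (Ec' x Tx S') as [->|S'']; [right; intros A; auto|].
      right. intros A HA. apply s_sub; auto.
    + left. apply fam_ext; auto.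
  - intros C Hch HC x Tx S.
    destruct (classic (exists c, C c /\ sub x c /\ ~ sub c x)) as [[c [Cc [S1 S2]]]|Hn].
    + destruct (HC c Cc) as [Tc Ec]. destruct (Ec x Tx S1) as [->|S3].
      * exfalso; apply S2; intros A; auto.
      * right. intros A HA. right. exists c; split; auto.
    + left. apply fam_ext; auto. intros A [HA|[c [Cc HA]]].
      * apply (tower_good x Tx); auto.
      * destruct (HC c Cc) as [Tc Ec]. destruct (L1 c Tc Ec x Tx) as [S1|S1].
        -- destruct (classic (sub c x)) as [S2|S2]; auto. exfalso; apply Hn; exists c; auto.
        -- apply S1, s_sub; auto.
Qed.

Lemma tower_chain : chain tower.
Proof.
  intros x y Tx Ty. destruct (L1 y Ty (L2 y Ty) x Tx) as [S|S]; [left; auto|right].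
  intros A HA; apply S, s_sub; auto.
Qed.

Lemma ultra_exists : exists M, good M /\ forall A, M A \/ M (fun n => ~ A n).
Proof.
  set (M := uC tower).
  assert (TM : tower M) by (apply tower_u; [apply tower_chain| auto]).
  assert (GM : good M) by apply (tower_good M TM).
  assert (Max : forall G, good G -> sub M G -> sub G M).
  { intros G GG S. destruct (classic (sub G M)) as [|N]; auto. exfalso.
    apply (s_strict M). exists G; auto.
    intros A HA. right. exists (s M); split; auto. apply tower_s; auto. }
  exists M; split; auto. intros A.
  destruct (classic (M A)) as [|NA]; [left; auto|right].
  destruct GM as [G1 [G2 [G3 [G4 G5]]]].
  set (G := fun B => exists C, M C /\ forall n, C n -> A n -> B n).
  destruct (classic (G (fun _ => False))) as [[C [MC HC]]|NG].
  - apply (G2 C); auto; intros n Cn An; apply (HC n); auto.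
  - exfalso. apply NA. apply (Max G).
    + split; [|split; [|split; [|split]]].
      * exists (fun _ => True); split; auto.
      * intros B1 B2 [C [MC HC]] H. exists C; split; auto.
      * intros B1 B2 [C1 [M1 H1]] [C2 [M2 H2]]. exists (fun n => C1 n /\ C2 n); split; auto.
        intros n [] An; split; auto.
      * auto.
      * intros B HB. exists B; split; auto.
    + intros B HB. exists B; split; auto.
    + exists (fun _ => True); split; auto.
Qed.

Lemma diffuse_mean : exists m0 : (nat -> Prop) -> R, is_mean nat m0 /\
  forall N, m0 (fun n => (n < N)%nat) = 0.
Proof.
  destruct ultra_exists as [M [[G1 [G2 [G3 [G4 G5]]]] U]].
  assert (Hdis : forall A B, M A -> M B -> (forall n, ~ (A n /\ B n)) -> False).
  { intros A B HA HB H. apply G4. apply (G2 _ _ (G3 A B HA HB)). intros n Hn; apply (H n); auto. }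
  exists (fun A => if excluded_middle_informative (M A) then 1 else 0). split; [split; [|split]|].
  - intros A; destruct excluded_middle_informative; lra.
  - unfold full_set. destruct excluded_middle_informative; [lra|tauto].
  - intros A B HAB. unfold set_union, disjoint in *.
    destruct (excluded_middle_informative (M A)) as [MA|MA];
    destruct (excluded_middle_informative (M B)) as [MB|MB].
    + exfalso; apply (Hdis A B); auto.
    + destruct excluded_middle_informative as [|N]; [lra|]. exfalso; apply N. apply (G2 A); auto.
    + destruct excluded_middle_informative as [|N]; [lra|]. exfalso; apply N. apply (G2 B); auto.
    + destruct excluded_middle_informative as [MU|]; [|lra]. exfalso.
      destruct (U A) as [|NA]; [tauto|]. destruct (U B) as [|NB]; [tauto|].
      apply (Hdis _ _ MU (G3 _ _ NA NB)). intros n [[Ha|Hb] [Hna Hnb]]; auto.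
  - intros N. destruct excluded_middle_informative as [MN|]; auto. exfalso.
    apply (Hdis _ (fun n => (N <= n)%nat) MN). apply G5. exists N; auto.
    intros n; lia.
Qed.


Lemma ci_of_bij (T : Type) (g : T -> nat) : (forall x y, g x = g y -> x = y) ->
  (forall n, exists x, g x = n) -> countably_infinite T.
Proof.
  intros Hi Hs.
  exists (fun n => proj1_sig (constructive_indefinite_description _ (Hs n))). split.
  - intros a b E.
    destruct (constructive_indefinite_description _ (Hs a)) as [x Hx].
    destruct (constructive_indefinite_description _ (Hs b)) as [y Hy]. simpl in E. subst; auto.
  - intros x. exists (g x).
    destruct (constructive_indefinite_description _ (Hs (g x))) as [y Hy]. simpl. apply Hi; auto.
Qed.

Fixpoint enc (l : list nat) : nat :=
  match l with nil => 0%nat | x :: l => S (Cantor.to_nat (x, enc l)) end.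

Lemma enc_inj l1 : forall l2, enc l1 = enc l2 -> l1 = l2.
Proof.
  induction l1 as [|a l1 IH]; intros [|b l2]; cbn [enc]; intros E; try discriminate; auto.
  assert (E2 : Cantor.to_nat (a, enc l1) = Cantor.to_nat (b, enc l2)) by (apply eq_add_S; exact E).
  apply (f_equal Cantor.of_nat) in E2. rewrite !Cantor.cancel_of_to in E2.
  injection E2 as -> E2. f_equal; auto.
Qed.

Lemma enc_surj n : exists l, enc l = n.
Proof.
  induction n as [n IH] using (well_founded_induction Wf_nat.lt_wf).
  destruct n as [|k]. exists nil; auto.
  destruct (Cantor.of_nat k) as [x y] eqn:E.
  assert (Ek : Cantor.to_nat (x, y) = k) by (rewrite <- E; apply Cantor.cancel_to_of).
  pose proof (Cantor.to_nat_non_decreasing x y).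
  destruct (IH y) as [l Hl]; [lia|]. exists (x :: l). cbn [enc]. rewrite Hl, Ek; auto.
Qed.

Lemma list_ci (X : Type) : countably_infinite X -> countably_infinite (list X).
Proof.
  intros [f [Hi Hs]].
  set (h := fun x => proj1_sig (constructive_indefinite_description _ (Hs x))).
  assert (Hh : forall x, f (h x) = x) by (intros x; unfold h; destruct constructive_indefinite_description; auto).
  apply (ci_of_bij _ (fun l => enc (map h l))).
  - intros a b E. apply enc_inj in E.
    apply (f_equal (map f)) in E. rewrite !map_map in E.
    rewrite !(map_ext _ (fun x => x) Hh), !map_id in E. auto.
  - intros n. destruct (enc_surj n) as [l Hl]. exists (map f l).
    rewrite map_map. rewrite (map_ext _ (fun x => x)); [rewrite map_id; auto|].
    intros a. apply Hi. rewrite Hh. auto.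
Qed.


Lemma pow_unit c n : 0 <= c <= 1 -> 0 <= c ^ n <= 1.
Proof. intros H; induction n; simpl; nra. Qed.

Section Prod.
Variable X : Type.
Variable mu : (X -> Prop) -> R.
Hypothesis Hmu : is_mean X mu.

Fixpoint P (n : nat) (A : list X -> Prop) : R :=
  match n with
  | O => if excluded_middle_informative (A nil) then 1 else 0
  | S n => I X mu Hmu (fun x => P n (fun l => A (x :: l)))
  end.

Lemma P_bnd n : forall A, 0 <= P n A <= 1.
Proof.
  induction n; intros A; simpl.
  - destruct excluded_middle_informative; lra.
  - apply I_bnd; auto. intros x; apply IHn.
Qed.

Lemma P_full n : P n (fun _ => True) = 1.
Proof.
  induction n; simpl.
  - destruct excluded_middle_informative; tauto.
  - rewrite (functional_extensionality (fun x : X => P n (fun _ => True)) (fun _ => 1)) by (intros; apply IHn). apply I_one; auto.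
Qed.

Lemma P_add n : forall A B, (forall l, ~ (A l /\ B l)) ->
  P n (fun l => A l \/ B l) = P n A + P n B.
Proof.
  induction n; intros A B H; simpl.
  - destruct (excluded_middle_informative (A nil)), (excluded_middle_informative (B nil)),
      (excluded_middle_informative (A nil \/ B nil)); try tauto; try lra. exfalso; apply (H nil); auto.
  - rewrite (functional_extensionality (fun x : X => P n (fun l => A (x :: l) \/ B (x :: l))) (fun x => P n (fun l => A (x :: l)) + P n (fun l => B (x :: l)))).
    2:{ intros x. apply (IHn (fun l => A (x :: l)) (fun l => B (x :: l))). intros l; apply H. }
    apply I_add; auto; intros x; try apply P_bnd.
    rewrite <- (IHn (fun l => A (x :: l)) (fun l => B (x :: l))) by (intros l; apply H). apply P_bnd.
Qed.

Lemma P_ext n A B : (forall l, A l <-> B l) -> P n A = P n B.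
Proof. intros H; rewrite (pred_ext A B H); auto. Qed.

Lemma P_empty n : P n (fun _ => False) = 0.
Proof.
  pose proof (P_add n (fun _ => False) (fun _ => False) ltac:(firstorder)) as E.
  cbv beta in E. rewrite (P_ext n (fun _ => False \/ False) (fun _ => False)) in E by tauto. lra.
Qed.

Variable G : Type.
Variable mul : G -> G -> G.
Variable one : G.
Variable inv : G -> G.
Hypothesis HG : is_group G mul one inv.
Variable act : G -> X -> X.
Hypothesis Hact : is_action G X mul one act.
Hypothesis Hpres : preserves_mean act mu.

Definition actK (g : G) (l : list X) : list X := map (act g) l.

Lemma act_inv_l g x : act (inv g) (act g x) = x.
Proof.
  destruct HG as [_ [_ [_ [H4 _]]]]. destruct Hact as [A1 A2].
  rewrite <- A2, H4, A1; auto.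
Qed.

Lemma act_inv_r g x : act g (act (inv g) x) = x.
Proof.
  destruct HG as [_ [_ [_ [_ H5]]]]. destruct Hact as [A1 A2].
  rewrite <- A2, H5, A1; auto.
Qed.

Lemma P_inv n : forall g A, P n (image_set actK g A) = P n A.
Proof.
  induction n; intros g A; simpl.
  - unfold image_set, actK.
    destruct (excluded_middle_informative (exists a, A a /\ nil = map (act g) a)) as [[a [Ha Ea]]|N1];
    destruct (excluded_middle_informative (A nil)); auto.
    + destruct a; [tauto|discriminate].
    + exfalso; apply N1; exists nil; auto.
  - rewrite (functional_extensionality (fun x : X => P n (fun l => image_set actK g A (x :: l))) (fun x => P n (fun l0 => A (act (inv g) x :: l0)))).
    2:{ intros x. rewrite <- (IHn g (fun l0 => A (act (inv g) x :: l0))). apply P_ext.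
        intros l; unfold image_set, actK; split.
        - intros [a [Ha Ea]]. destruct a as [|y a]; [discriminate|]. simpl in Ea. injection Ea as -> ->.
          exists a; split; auto. rewrite act_inv_l; auto.
        - intros [a [Ha ->]]. exists (act (inv g) x :: a); split; auto. simpl. rewrite act_inv_r; auto. }
    apply (I_inv X mu Hmu (act (inv g)) ) with (f := fun y => P n (fun l0 => A (y :: l0))).
    + intros Q. rewrite <- (Hpres g Q). apply m_ext; auto. intros x; unfold image_set; split.
      * intros Hq. exists (act (inv g) x); split; auto. rewrite act_inv_r; auto.
      * intros [a [Ha ->]]. rewrite act_inv_l; auto.
    + intros y; apply P_bnd.
Qed.

Lemma P_fix n g : P n (fix_set actK g) <= (mu (fix_set act g)) ^ n.
Proof.
  set (c := mu (fix_set act g)). pose proof (m_bnd X mu Hmu (fix_set act g)) as Hc. fold c in Hc.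
  induction n; simpl.
  - destruct excluded_middle_informative; lra.
  - assert (Hp : 0 <= c ^ n <= 1) by (apply pow_unit; lra).
    apply Rle_trans with (I X mu Hmu (fun x => c ^ n * rind (fix_set act g) x)).
    + apply I_mono; auto.
      * intros x; apply P_bnd.
      * intros x; unfold rind; destruct excluded_middle_informative; nra.
      * intros x. unfold rind. destruct excluded_middle_informative as [Fx|Fx].
        -- rewrite Rmult_1_r. rewrite <- IHn. apply Req_le, P_ext.
           intros l; unfold fix_set, actK; simpl. split; [intros E; injection E; auto|].
           intros E; rewrite E; f_equal; auto.
        -- rewrite Rmult_0_r. rewrite (P_ext n _ (fun _ => False)). rewrite P_empty; lra.
           intros l; unfold fix_set, actK; simpl. split; [intros E; injection E; auto|tauto].
    + pose proof (I_scale_le X mu Hmu (c ^ n) (fix_set act g) Hp). fold c in H. nra.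
Qed.

End Prod.


Lemma pow_decr c N n : 0 <= c <= 1 -> (N <= n)%nat -> c ^ n <= c ^ N.
Proof.
  intros Hc Hn. replace n with (N + (n - N))%nat by lia. rewrite pow_add.
  pose proof (pow_unit c N Hc). pose proof (pow_unit c (n - N) Hc). nra.
Qed.

Lemma diffuse_zero (m0 : (nat -> Prop) -> R) (Hm0 : is_mean nat m0)
  (Hfin : forall N, m0 (fun n => (n < N)%nat) = 0) (a : nat -> R) (c : R) :
  0 <= c < 1 -> unitf nat a -> (forall n, a n <= c ^ n) -> I nat m0 Hm0 a = 0.
Proof.
  intros Hc Ha Hb.
  assert (Hup : forall N, I nat m0 Hm0 a <= c ^ N).
  { intros N. pose proof (pow_unit c N ltac:(lra)) as HcN.
    set (h1 := rind (fun n => (n < N)%nat)).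
    set (h2 := fun n => c ^ N * rind (fun n => ~ (n < N)%nat) n).
    assert (U1 : unitf nat h1) by apply unitf_rind.
    assert (U2 : unitf nat h2) by (intros n; unfold h2, rind; destruct excluded_middle_informative; nra).
    assert (U3 : unitf nat (fun n => h1 n + h2 n)).
    { intros n; unfold h1, h2, rind. destruct excluded_middle_informative; destruct excluded_middle_informative; try tauto; nra. }
    apply Rle_trans with (I nat m0 Hm0 (fun n => h1 n + h2 n)).
    - apply I_mono; auto. intros n. unfold h1, h2, rind.
      destruct excluded_middle_informative as [L|L]; destruct excluded_middle_informative; try tauto.
      + specialize (Ha n); lra.
      + rewrite Rmult_1_r, Rplus_0_l. eapply Rle_trans; [apply Hb|]. apply pow_decr; lia || lra.
    - rewrite I_add by auto. unfold h1. rewrite I_ind, Hfin.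
      pose proof (I_scale_le nat m0 Hm0 (c ^ N) (fun n => ~ (n < N)%nat) HcN).
      pose proof (m_bnd nat m0 Hm0 (fun n => ~ (n < N)%nat)). fold h2 in H. nra. }
  pose proof (I_bnd nat m0 Hm0 a Ha).
  destruct (Rle_lt_or_eq_dec 0 _ (proj1 H)) as [Hp|]; [|auto].
  destruct (pow_lt_1_zero c ltac:(rewrite Rabs_pos_eq; lra) _ Hp) as [N HN].
  specialize (HN N (le_n N)). rewrite Rabs_pos_eq in HN by (apply pow_le; lra).
  specialize (Hup N). lra.
Qed.

Theorem lemma5p2 (G : Type) (mul : G -> G -> G) (one : G) (inv : G -> G)
  (HG : is_group G mul one inv) (HGc : countable G)
  (X : Type) (act : G -> X -> X) (mu : (X -> Prop) -> R)
  (HX : countably_infinite X) (Hact : is_action G X mul one act)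
  (Hmu : is_mean X mu) (Hpres : preserves_mean act mu)
  (Hfix : forall g, g <> one -> mu (fix_set act g) < 1) :
  exists (K : Type) (actK : G -> K -> K) (nu : (K -> Prop) -> R),
    countably_infinite K /\ is_action G K mul one actK /\ is_mean K nu /\
    preserves_mean actK nu /\
    (forall g, g <> one -> nu (fix_set actK g) = 0).
Proof.
  destruct diffuse_mean as [m0 [Hm0 Hfin]].
  exists (list X), (actK X G act), (fun A => I nat m0 Hm0 (fun n => P X mu Hmu n A)).
  assert (UP : forall A, unitf nat (fun n => P X mu Hmu n A)) by (intros A n; apply P_bnd).
  split; [apply list_ci; auto|].
  split; [|split; [|split]].
  - destruct Hact as [A1 A2]. split.
    + intros l; unfold actK; induction l; simpl; auto. rewrite A1, IHl; auto.
    + intros g h l; unfold actK; induction l; simpl; auto. rewrite A2, IHl; auto.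
  - split; [|split].
    + intros A. apply I_bnd, UP.
    + rewrite (functional_extensionality (fun n => P X mu Hmu n (full_set (list X))) (fun _ => 1)).
      apply I_one. intros n. apply P_full.
    + intros A B HAB.
      rewrite (functional_extensionality (fun n => P X mu Hmu n (set_union A B))
         (fun n => P X mu Hmu n A + P X mu Hmu n B)).
      * apply I_add; auto. intros n. rewrite <- (P_add X mu Hmu n A B HAB). apply P_bnd.
      * intros n. apply (P_add X mu Hmu n A B HAB).
  - intros g A. f_equal. apply functional_extensionality. intros n.
    apply (P_inv X mu Hmu G mul one inv HG act Hact Hpres).
  - intros g Hg. apply (diffuse_zero m0 Hm0 Hfin _ (mu (fix_set act g))).
    + pose proof (m_bnd X mu Hmu (fix_set act g)). specialize (Hfix g Hg). lra.
    + apply UP.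
    + intros n. apply P_fix.
Qed.
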